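(* Let $X$ be a proper geodesic $\mathrm{CAT}(-1)$ metric space and $H$ a horoball in $X$. For all $a,b\in\partial H$ with $d(a,b)\ge 4.056$ and every $a_0\in[a,b]$, we have $$a_0\in H\left[\tfrac23\min\{d(a_0,a),d(a_0,b)\}\right].$$
   Context: For $\xi\in\partial_\infty X$, $\beta_\xi(x,y)=\lim_{t\to\infty}(d(x,\rho(t))-d(y,\rho(t)))$ for any geodesic ray $\rho$ converging to $\xi$. If $H=\{y:\beta_\xi(x,y)\ge s\}$ is a horoball, its boundary horosphere is $\partial H=\{y:\beta_\xi(x,y)=s\}$ and, for $t\ge0$, $H[t]=\{y:\beta_\xi(x,y)\ge s+t\}$. *)

(* Defs.v *)
From Stdlib Require Import Reals Lra List.
Open Scope R_scope.

Set Implicit Arguments.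
Section Metric.
Variable X : Type.
Variable d : X -> X -> R.

Definition is_metric : Prop :=
  (forall x y, 0 <= d x y) /\
  (forall x y, d x y = 0 <-> x = y) /\
  (forall x y, d x y = d y x) /\
  (forall x y z, d x z <= d x y + d y z).

Definition open_set (U : X -> Prop) : Prop :=
  forall y, U y -> exists e, 0 < e /\ forall z, d y z < e -> U z.

Definition compact_set (K : X -> Prop) : Prop :=
  forall (I : Type) (U : I -> X -> Prop),
    (forall i, open_set (U i)) ->
    (forall y, K y -> exists i, U i y) ->
    exists l : list I, forall y, K y -> exists i, In i l /\ U i y.

Definition proper_space : Prop :=
  forall x r, compact_set (fun y => d x y <= r).

Definition geod_seg (c : R -> X) (L : R) (p q : X) : Prop :=
  0 <= L /\ c 0 = p /\ c L = q /\
  forall s t, 0 <= s <= L -> 0 <= t <= L -> d (c s) (c t) = Rabs (s - t).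

Definition geodesic_space : Prop :=
  forall p q, exists c L, geod_seg c L p q.

Definition geod_ray (rho : R -> X) : Prop :=
  forall s t, 0 <= s -> 0 <= t -> d (rho s) (rho t) = Rabs (s - t).

(* beta_xi(x,y) = l, where xi is the endpoint of the ray rho *)
Definition busemann_lim (rho : R -> X) (x y : X) (l : R) : Prop :=
  forall eps, 0 < eps -> exists T, forall t, T <= t ->
    Rabs (d x (rho t) - d y (rho t) - l) < eps.

(* y belongs to H[t], where H = {y : beta_xi(x,y) >= s}, xi = rho(+oo) *)
Definition in_horoball_t (rho : R -> X) (x : X) (s t : R) (y : X) : Prop :=
  exists l, busemann_lim rho x y l /\ s + t <= l.

(* y belongs to the horosphere dH = {y : beta_xi(x,y) = s} *)
Definition in_horosphere (rho : R -> X) (x : X) (s : R) (y : X) : Prop :=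
  busemann_lim rho x y s.

End Metric.

(* The hyperbolic plane: hyperboloid model in R^3 *)
Definition H2pt (u : R * R * R) : Prop :=
  let '(u0, u1, u2) := u in u0 * u0 - u1 * u1 - u2 * u2 = 1 /\ 0 < u0.

Definition acosh (z : R) : R := ln (z + sqrt (z * z - 1)).

Definition dH2 (u v : R * R * R) : R :=
  let '(u0, u1, u2) := u in let '(v0, v1, v2) := v in
  acosh (u0 * v0 - u1 * v1 - u2 * v2).

(* A side of a geodesic triangle: geodesic c of length L, together with the
   endpoints A, B of the corresponding side of the comparison triangle. *)
Definition side (X : Type) : Type := ((R -> X) * R * (R * R * R) * (R * R * R))%type.

(* CAT(-1) inequality for a point on side S1 and a point on side S2:
   xb, yb are the comparison points (the points on the comparison sides
   at the corresponding distances from the endpoints). *)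
Definition cat_pair (X : Type) (d : X -> X -> R) (S1 S2 : side X) : Prop :=
  let '(c1, L1, A1, B1) := S1 in let '(c2, L2, A2, B2) := S2 in
  forall s t xb yb,
    0 <= s <= L1 -> 0 <= t <= L2 -> H2pt xb -> H2pt yb ->
    dH2 A1 xb = s -> dH2 xb B1 = L1 - s ->
    dH2 A2 yb = t -> dH2 yb B2 = L2 - t ->
    d (c1 s) (c2 t) <= dH2 xb yb.

Definition CAT_minus1 (X : Type) (d : X -> X -> R) : Prop :=
  forall (p q r : X) (c1 c2 c3 : R -> X) (L1 L2 L3 : R) (P Q Rr : R * R * R),
    geod_seg d c1 L1 p q -> geod_seg d c2 L2 q r -> geod_seg d c3 L3 r p ->
    H2pt P -> H2pt Q -> H2pt Rr ->
    dH2 P Q = L1 -> dH2 Q Rr = L2 -> dH2 Rr P = L3 ->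
    let S := (c1, L1, P, Q) :: (c2, L2, Q, Rr) :: (c3, L3, Rr, P) :: nil in
    forall S1 S2, In S1 S -> In S2 S -> cat_pair d S1 S2.

(* Main.v *)
Require Import Defs.
From Stdlib Require Import Reals Lra Lia Psatz Classical Factorial.
Open Scope R_scope.
Definition ch x := (exp x + / exp x)/2.
Definition sh x := (exp x - / exp x)/2.
Lemma exp_le_mono a b : a <= b -> exp a <= exp b.
Proof. intros [H|H]; [left; apply exp_increasing; exact H| subst; lra]. Qed.

Lemma exp_ge1 x : 0 <= x -> 1 <= exp x.
Proof. intros; rewrite <- exp_0; apply exp_le_mono; lra. Qed.

Lemma ch_sh x : ch x * ch x - sh x * sh x = 1.
Proof. unfold ch, sh. pose proof (exp_pos x). field. lra. Qed.

Lemma sh_nonneg x : 0 <= x -> 0 <= sh x.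
Proof. intros. unfold sh. pose proof (exp_ge1 x H). pose proof (exp_pos x).
  assert (/ exp x <= 1). { rewrite <- Rinv_1. apply Rinv_le_contravar; lra. } lra. Qed.

Lemma sh_pos x : 0 < x -> 0 < sh x.
Proof. intros. unfold sh. assert (1 < exp x) by (rewrite <- exp_0; apply exp_increasing; lra).
  assert (/ exp x < 1). { rewrite <- Rinv_1. apply Rinv_lt_contravar; lra. } lra. Qed.

Lemma ch_ge1 x : 1 <= ch x.
Proof. unfold ch. pose proof (exp_pos x). set (e := exp x) in *.
  assert (e + /e - 2 = (e-1)*(e-1)/e) by (field; lra).
  assert (0 <= (e-1)*(e-1)/e). { unfold Rdiv; apply Rmult_le_pos; [apply Rle_0_sqr| left; apply Rinv_0_lt_compat; lra]. } lra. Qed.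

Lemma ch_plus a b : ch (a+b) = ch a * ch b + sh a * sh b.
Proof. unfold ch, sh. rewrite exp_plus. pose proof (exp_pos a). pose proof (exp_pos b). field; lra. Qed.
Lemma ch_minus a b : ch (a-b) = ch a * ch b - sh a * sh b.
Proof. unfold ch, sh, Rminus. rewrite exp_plus, exp_Ropp. pose proof (exp_pos a). pose proof (exp_pos b). field; lra. Qed.
Lemma sh_minus a b : sh (a-b) = sh a * ch b - ch a * sh b.
Proof. unfold ch, sh, Rminus. rewrite exp_plus, exp_Ropp. pose proof (exp_pos a). pose proof (exp_pos b). field; lra. Qed.

Lemma ch_mono x y : 0 <= x <= y -> ch x <= ch y.
Proof. intros H. unfold ch. pose proof (exp_ge1 x ltac:(lra)). pose proof (exp_le_mono x y ltac:(lra)).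
  set (a := exp x) in *. set (b := exp y) in *.
  assert ((b + /b) - (a + /a) = (b - a)*(a*b - 1)/(a*b)) by (field; lra).
  assert (0 <= (b - a)*(a*b - 1)/(a*b)). { unfold Rdiv; apply Rmult_le_pos; [apply Rmult_le_pos; nra| left; apply Rinv_0_lt_compat; nra]. } lra. Qed.

Lemma ch_even x : ch (-x) = ch x.
Proof. unfold ch. rewrite exp_Ropp. rewrite Rinv_inv. lra. Qed.

Lemma ch_abs_mono x y : Rabs x <= Rabs y -> ch x <= ch y.
Proof. intros H. assert (ch x = ch (Rabs x)). { unfold Rabs; destruct Rcase_abs; [rewrite ch_even|]; auto. }
  assert (ch y = ch (Rabs y)). { unfold Rabs; destruct Rcase_abs; [rewrite ch_even|]; auto. }
  rewrite H0, H1. apply ch_mono. split; auto. apply Rabs_pos. Qed.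

Lemma acosh_eq x v : 0 <= x -> v = ch x -> acosh v = x.
Proof. intros Hx ->. unfold acosh. pose proof (ch_sh x).
  replace (ch x * ch x - 1) with (sh x * sh x) by lra. rewrite sqrt_square by (apply sh_nonneg; auto).
  replace (ch x + sh x) with (exp x) by (unfold ch, sh; field; pose proof (exp_pos x); lra). apply ln_exp. Qed.

Lemma acosh1 : acosh 1 = 0.
Proof. apply acosh_eq; [lra|]. unfold ch. rewrite exp_0. field. Qed.

Lemma exp_acosh_le M : 0 < M -> exp (acosh M) <= 2 * M.
Proof. intros HM. unfold acosh.
  assert (Hs : sqrt (M*M - 1) <= M).
  { destruct (Rle_dec (M*M-1) 0). rewrite sqrt_neg_0; lra.
    pose proof (sqrt_square M ltac:(lra)) as Hq. pattern M at 3; rewrite <- Hq. apply sqrt_le_1_alt. lra. }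
  pose proof (sqrt_pos (M*M-1)). rewrite exp_ln by lra. lra. Qed.

Lemma exp_lb_series x N : 0 <= x -> sum_f_R0 (fun k => / INR (fact k) * x ^ k) N <= exp x.
Proof.
  intros Hx. unfold exp. destruct (exist_exp x) as [l Hl]. simpl.
  apply (growing_ineq (fun N => sum_f_R0 (fun k => / INR (fact k) * x ^ k) N)); [|exact Hl].
  unfold Un_growing; intro n. cbn [sum_f_R0]. assert (0 <= / INR (fact (S n)) * x ^ S n).
  { apply Rmult_le_pos. left; apply Rinv_0_lt_compat, INR_fact_lt_0. apply pow_le; lra. }
  lra.
Qed.
Lemma exp0676 : 196596/100000 <= exp (676/1000).
Proof.
  assert (H : 1 + 169/1000 + (169/1000)^2/2 + (169/1000)^3/6 + (169/1000)^4/24 <= exp (169/1000)).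
  { eapply Rle_trans; [|apply (exp_lb_series _ 4); lra].
    simpl sum_f_R0. simpl fact. simpl INR. lra. }
  replace (676/1000) with (169/1000 + 169/1000 + 169/1000 + 169/1000) by lra.
  rewrite !exp_plus.
  set (e := exp (169/1000)) in *.
  assert (0 <= 1 + 169/1000 + (169/1000)^2/2 + (169/1000)^3/6 + (169/1000)^4/24) by lra.
  set (p := 1 + 169/1000 + (169/1000)^2/2 + (169/1000)^3/6 + (169/1000)^4/24) in *.
  assert (p*p <= e*e) by (apply Rmult_le_compat; lra).
  assert (p*p*p*p <= e*e*e*e).
  { assert (0 <= p*p) by nra. replace (p*p*p*p) with ((p*p)*(p*p)) by ring. replace (e*e*e*e) with ((e*e)*(e*e)) by ring. apply Rmult_le_compat; lra. }
  unfold p in *. lra.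
Qed.
Lemma g_pos Q : 196596/100000 <= Q -> 0 <= Q^6 - 2*Q^5 + 1.
Proof.
  intros H. set (q0 := 196596/100000) in *. set (t := Q - q0).
  assert (Ht : 0 <= t) by (unfold t; lra).
  replace Q with (q0 + t) by (unfold t; ring).
  assert (0 <= t^2) by (apply pow_le; lra).
  assert (0 <= t^3) by (apply pow_le; lra).
  assert (0 <= t^4) by (apply pow_le; lra).
  assert (0 <= t^5) by (apply pow_le; lra).
  assert (0 <= t^6) by (apply pow_le; lra).
  unfold q0. ring_simplify. lra.
Qed.
Lemma poly_key Y Q : 1 <= Y -> Y <= Q -> 196596/100000 <= Q ->
  Y^6 - (Q^6+1)*Y + Q^6 <= 0.
Proof.
  intros H1 H2 H3. pose proof (g_pos Q H3).
  assert (HsQ : 1 + Q + Q^2 + Q^3 + Q^4 + Q^5 <= Q^6 + 1).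
  { assert (Q*(1 + Q + Q^2 + Q^3 + Q^4 + Q^5 - Q^6 - 1) * (Q - 1) <= 0).
    { replace (Q*(1 + Q + Q^2 + Q^3 + Q^4 + Q^5 - Q^6 - 1) * (Q - 1)) with (- Q * Q * (Q^6 - 2*Q^5 + 1)) by ring.
      assert (0 <= Q*Q) by nra. nra. }
    assert (0 < Q*(Q-1)) by nra. nra. }
  assert (Y^2 <= Q^2) by (apply pow_incr; lra).
  assert (Y^3 <= Q^3) by (apply pow_incr; lra).
  assert (Y^4 <= Q^4) by (apply pow_incr; lra).
  assert (Y^5 <= Q^5) by (apply pow_incr; lra).
  replace (Y^6 - (Q^6+1)*Y + Q^6) with ((Y-1)*((1+Y+Y^2+Y^3+Y^4+Y^5) - (Q^6+1))) by ring.
  assert (0 <= Y - 1) by lra. assert ((1+Y+Y^2+Y^3+Y^4+Y^5) - (Q^6+1) <= 0) by lra. nra.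
Qed.
Lemma sinh_key D u : 4056/1000 <= D -> 0 <= u <= D/2 ->
  sh (D-u) + sh u <= exp (-(2/3*u)) * sh D.
Proof.
  intros HD Hu. unfold sh.
  set (Q := exp (D/6)). set (Y := exp (u/3)).
  assert (EQ : exp D = Q^6).
  { unfold Q. replace D with (D/6+D/6+D/6+D/6+D/6+D/6) at 1 by field. rewrite !exp_plus. ring. }
  assert (EY : exp u = Y^3).
  { unfold Y. replace u with (u/3+u/3+u/3) at 1 by field. rewrite !exp_plus. ring. }
  assert (EDu : exp (D-u) = Q^6 * / Y^3).
  { unfold Rminus. rewrite exp_plus, exp_Ropp, EQ, EY. ring. }
  assert (E2 : exp (-(2/3*u)) = / Y^2).
  { rewrite exp_Ropp. f_equal. unfold Y. replace (2/3*u) with (u/3+u/3) by field. rewrite exp_plus. ring. }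
  rewrite EQ, EDu, E2, EY.
  assert (HQ : 196596/100000 <= Q).
  { eapply Rle_trans; [apply exp0676|]. apply exp_le_mono. lra. }
  assert (HY1 : 1 <= Y) by (pose proof (exp_ineq1_le (u/3)); unfold Y; lra).
  assert (HYQ : Y <= Q) by (apply exp_le_mono; lra).
  pose proof (poly_key Y Q HY1 HYQ HQ).
  assert (0 < Y^3) by (apply pow_lt; lra).
  assert (0 < Q^6) by (apply pow_lt; lra).
  assert (1 <= Q^6) by (apply pow_R1_Rle; lra).
  apply Rminus_le.
  replace ((Q ^ 6 * / Y ^ 3 - / (Q ^ 6 * / Y ^ 3)) / 2 + (Y ^ 3 - / Y ^ 3) / 2 - / Y ^ 2 * ((Q ^ 6 - / Q ^ 6) / 2))
    with ((Q^6-1)*(Y^6 - (Q^6+1)*Y + Q^6) / (2*Y^3*Q^6)) by (field; lra).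
  unfold Rdiv. assert (0 < / (2*Y^3*Q^6)) by (apply Rinv_0_lt_compat; nra). assert ((Q^6-1)*(Y^6 - (Q^6+1)*Y + Q^6) <= 0) by nra. nra.
Qed.
Lemma buse_exists (X : Type) (d : X -> X -> R) (rho : R -> X) :
  is_metric d -> geod_ray d rho -> forall p, exists G,
  (forall t, 0 <= t -> G <= d p (rho t) - t) /\
  (forall eps, 0 < eps -> exists T, 0 <= T /\ forall t, T <= t -> d p (rho t) - t <= G + eps).
Proof.
  intros [Hpos [Hzero [Hsym Htri]]] Hr p.
  assert (Hmono : forall t0 t, 0 <= t0 -> t0 <= t -> d p (rho t) - t <= d p (rho t0) - t0).
  { intros t0 t H0 H1. pose proof (Htri p (rho t0) (rho t)). rewrite (Hr t0 t) in H by lra.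
    rewrite Rabs_left1 in H by lra. lra. }
  set (E := fun v => exists t, 0 <= t /\ v = t - d p (rho t)).
  assert (HB : bound E).
  { exists (d p (rho 0)). intros v [t [Ht ->]]. pose proof (Htri (rho 0) p (rho t)).
    rewrite (Hr 0 t) in H by lra. rewrite Rabs_left1 in H by lra. rewrite (Hsym (rho 0) p) in H. lra. }
  assert (HE : exists v, E v) by (exists (0 - d p (rho 0)); exists 0; split; lra).
  destruct (completeness E HB HE) as [m [Hub Hlub]].
  exists (- m). split.
  - intros t Ht. assert (E (t - d p (rho t))) by (exists t; split; lra). apply Hub in H. lra.
  - intros eps Heps.
    assert (exists v, E v /\ m - eps < v) as [v [[t0 [Ht0 ->]] Hv]].
    { apply NNPP. intro Hn. assert (is_upper_bound E (m - eps)).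
      { intros v Ev. apply Rnot_lt_le. intro Hl. apply Hn. exists v. split; auto. }
      apply Hlub in H. lra. }
    exists t0. split; auto. intros t Ht. pose proof (Hmono t0 t Ht0 Ht). lra.
Qed.

Lemma buse_lim_of (X : Type) (d : X -> X -> R) (rho : R -> X) x y Gx Gy :
  (forall t, 0 <= t -> Gx <= d x (rho t) - t) ->
  (forall eps, 0 < eps -> exists T, 0 <= T /\ forall t, T <= t -> d x (rho t) - t <= Gx + eps) ->
  (forall t, 0 <= t -> Gy <= d y (rho t) - t) ->
  (forall eps, 0 < eps -> exists T, 0 <= T /\ forall t, T <= t -> d y (rho t) - t <= Gy + eps) ->
  busemann_lim d rho x y (Gx - Gy).
Proof.
  intros H1 H2 H3 H4 eps Heps.
  destruct (H2 (eps/2)) as [T1 [HT1 K1]]; [lra|].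
  destruct (H4 (eps/2)) as [T2 [HT2 K2]]; [lra|].
  exists (Rmax T1 T2). intros t Ht.
  pose proof (Rmax_l T1 T2). pose proof (Rmax_r T1 T2).
  specialize (K1 t ltac:(lra)). specialize (K2 t ltac:(lra)).
  specialize (H1 t ltac:(lra)). specialize (H3 t ltac:(lra)).
  apply Rabs_def1; lra.
Qed.

Lemma buse_unique (X : Type) (d : X -> X -> R) (rho : R -> X) x y l1 l2 :
  busemann_lim d rho x y l1 -> busemann_lim d rho x y l2 -> l1 = l2.
Proof.
  intros H1 H2. destruct (Req_dec l1 l2) as [|Hne]; auto. exfalso.
  set (e := Rabs (l1 - l2) / 2).
  assert (He : 0 < e) by (unfold e; pose proof (Rabs_pos_lt _ (Rminus_eq_contra _ _ Hne)); lra).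
  destruct (H1 e He) as [T1 K1]. destruct (H2 e He) as [T2 K2].
  specialize (K1 (Rmax T1 T2) (Rmax_l _ _)). specialize (K2 (Rmax T1 T2) (Rmax_r _ _)).
  set (f := d x (rho (Rmax T1 T2)) - d y (rho (Rmax T1 T2))) in *.
  pose proof (Rabs_triang (f - l2) (l1 - f)).
  replace (f - l2 + (l1 - f)) with (l1 - l2) in H by ring.
  rewrite (Rabs_minus_sym l1 f) in H. unfold e in *. lra.
Qed.
Lemma geom (X : Type) (d : X -> X -> R) (Hmet : is_metric d) (Hgeod : geodesic_space d)
  (Hcat : CAT_minus1 d) a b c L (Hc : geod_seg d c L a b) u (Hu : 0 <= u <= L) (HL : 0 < L) z :
  exp (d (c u) z) <= sh (L-u)/sh L * exp (d a z) + sh u / sh L * exp (d b z) + (sh (L-u)/sh L + sh u/sh L).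
Proof.
  destruct Hmet as [Hpos [Hzero [Hsym Htri]]].
  pose proof Hc as Hc'. destruct Hc' as [HL0 [Hc0 [HcL Hcd]]].
  assert (Hab : d a b = L). { rewrite <- Hc0, <- HcL, Hcd by lra. rewrite Rabs_left1; lra. }
  destruct (Hgeod b z) as [c2 [L2 H2]]. destruct (Hgeod z a) as [c3 [L3 H3]].
  pose proof H2 as H2'. destruct H2' as [HL2 [H20 [H2L H2d]]].
  pose proof H3 as H3'. destruct H3' as [HL3 [H30 [H3L H3d]]].
  assert (HB : d b z = L2). { rewrite <- H20, <- H2L, H2d by lra. rewrite Rabs_left1; lra. }
  assert (HA : d z a = L3). { rewrite <- H30, <- H3L, H3d by lra. rewrite Rabs_left1; lra. }
  rewrite (Hsym a z), HA, HB.
  set (A := L3) in *. set (B := L2) in *.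
  assert (T1 : B <= L + A). { pose proof (Htri b a z). rewrite (Hsym b a), Hab, (Hsym a z), HA, HB in H. lra. }
  assert (T2 : A <= L + B). { pose proof (Htri z b a). rewrite (Hsym z b), (Hsym b a), Hab, HA, HB in H. lra. }
  assert (T3 : L <= A + B). { pose proof (Htri a z b). rewrite Hab, (Hsym a z), HA, (Hsym z b), HB in H. lra. }
  assert (HshL : 0 < sh L) by (apply sh_pos; lra).
  set (z1 := (ch A * ch L - ch B) / sh L).
  assert (Hup : ch B <= ch A * ch L + sh A * sh L).
  { rewrite <- ch_plus. apply ch_abs_mono. rewrite !Rabs_right; lra. }
  assert (Hlo : ch A * ch L - sh A * sh L <= ch B).
  { rewrite <- ch_minus. apply ch_abs_mono. rewrite (Rabs_right B) by lra. apply Rabs_le; lra. }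
  assert (HshA : 0 <= sh A) by (apply sh_nonneg; lra).
  assert (Hz1 : z1 * z1 <= sh A * sh A).
  { assert (E : z1 * sh L = ch A * ch L - ch B) by (unfold z1; field; lra).
    assert (Rabs (z1 * sh L) <= sh A * sh L) by (rewrite E; apply Rabs_le; lra).
    rewrite Rabs_mult, (Rabs_right (sh L)) in H by lra.
    assert (Rabs z1 <= sh A). { apply Rmult_le_reg_r with (sh L); lra. }
    pose proof (Rabs_pos z1).
    assert (Hq : Rabs z1 * Rabs z1 <= sh A * sh A) by nra.
    rewrite <- Rabs_mult in Hq. rewrite Rabs_right in Hq; [lra|]. apply Rle_ge, Rle_0_sqr. }
  pose proof (ch_sh A) as EA.
  set (z2 := sqrt (ch A * ch A - z1 * z1 - 1)).
  assert (Hz2 : z2 * z2 = ch A * ch A - z1 * z1 - 1) by (apply sqrt_sqrt; lra).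
  set (Pa := (1, 0, 0) : R * R * R). set (Pb := (ch L, sh L, 0) : R * R * R).
  set (Pz := (ch A, z1, z2) : R * R * R). set (Py := (ch u, sh u, 0) : R * R * R).
  pose proof (ch_sh L) as EL. pose proof (ch_sh u) as Eu.
  pose proof (ch_ge1 A). pose proof (ch_ge1 L). pose proof (ch_ge1 u).
  assert (HPa : H2pt Pa) by (simpl; split; lra).
  assert (HPb : H2pt Pb) by (simpl; split; lra).
  assert (HPz : H2pt Pz) by (simpl; split; lra).
  assert (HPy : H2pt Py) by (simpl; split; lra).
  assert (D1 : dH2 Pa Pb = L) by (simpl; apply acosh_eq; [lra| ring]).
  assert (D2 : dH2 Pb Pz = B) by (simpl; apply acosh_eq; [lra| unfold z1; field; lra]).
  assert (D3 : dH2 Pz Pa = A) by (simpl; apply acosh_eq; [lra| ring]).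
  pose proof (Hcat a b z c c2 c3 L L2 L3 Pa Pb Pz Hc H2 H3 HPa HPb HPz D1 D2 D3) as HC.
  cbv zeta in HC.
  specialize (HC _ _ (or_introl eq_refl) (or_intror (or_introl eq_refl))).
  cbn beta iota zeta delta [cat_pair] in HC.
  assert (E1 : dH2 Pa Py = u) by (simpl; apply acosh_eq; [lra| ring]).
  assert (E2 : dH2 Py Pb = L - u) by (simpl; apply acosh_eq; [lra| rewrite ch_minus; ring]).
  assert (E4 : dH2 Pz Pz = L2 - L2).
  { replace (L2 - L2) with 0 by ring. simpl. rewrite <- acosh1. f_equal. lra. }
  specialize (HC u L2 Py Pz ltac:(lra) (conj HL2 (Rle_refl _)) HPy HPz E1 E2 D2 E4).
  assert (HC2 : d (c u) z <= dH2 Py Pz) by (rewrite <- H2L; exact HC). clear HC. rename HC2 into HC.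
  set (al := sh (L-u) / sh L). set (be := sh u / sh L).
  assert (Hal : 0 <= al) by (unfold al, Rdiv; apply Rmult_le_pos; [apply sh_nonneg; lra| left; apply Rinv_0_lt_compat; lra]).
  assert (Hbe : 0 <= be) by (unfold be, Rdiv; apply Rmult_le_pos; [apply sh_nonneg; lra| left; apply Rinv_0_lt_compat; lra]).
  assert (Hab0 : 0 < al + be).
  { destruct (Rle_lt_or_eq_dec 0 u (proj1 Hu)) as [Hu0|Hu0].
    - assert (0 < sh u) by (apply sh_pos; lra). unfold be.
      assert (0 < sh u / sh L) by (apply Rdiv_lt_0_compat; lra). lra.
    - unfold al, be. rewrite <- Hu0, Rminus_0_r. assert (sh 0 = 0) by (unfold sh; rewrite exp_0; field). rewrite H4. unfold Rdiv. rewrite Rinv_r by lra. lra. }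
  set (M := ch u * ch A - sh u * z1 - 0 * z2).
  assert (HM : M = al * ch A + be * ch B).
  { unfold M, al, be, z1. rewrite sh_minus. field. lra. }
  assert (HMpos : 0 < M). { rewrite HM. pose proof (ch_ge1 B). assert (al * 1 <= al * ch A) by (apply Rmult_le_compat_l; lra). assert (be * 1 <= be * ch B) by (apply Rmult_le_compat_l; lra). lra. }
  eapply Rle_trans. { apply exp_le_mono. exact HC. }
  change (dH2 Py Pz) with (acosh M).
  eapply Rle_trans. { apply exp_acosh_le. exact HMpos. }
  rewrite HM. unfold ch.
  assert (/ exp A <= 1). { rewrite <- Rinv_1. apply Rinv_le_contravar; [lra| apply exp_ge1; lra]. }
  assert (/ exp B <= 1). { rewrite <- Rinv_1. apply Rinv_le_contravar; [lra| apply exp_ge1; lra]. }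
  nra.
Qed.

Lemma eps_le_lem x y z : 0 <= z -> (forall e, 0 < e -> x <= y + e * z + e) -> x <= y.
Proof.
  intros Hz H. apply Rnot_lt_le. intro Hl.
  set (e := (x - y) / (2 * (z + 1))).
  assert (He : 0 < e) by (unfold e; apply Rdiv_lt_0_compat; lra).
  specialize (H e He).
  assert (e * (z + 1) = (x - y)/2) by (unfold e; field; lra). nra.
Qed.

Theorem lemma2p12 (X : Type) (d : X -> X -> R)
  (Hmet : is_metric d) (Hprop : proper_space d) (Hgeod : geodesic_space d)
  (Hcat : CAT_minus1 d)
  (rho : R -> X) (Hrho : geod_ray d rho) (x : X) (s : R)
  (a b : X) (Ha : in_horosphere d rho x s a) (Hb : in_horosphere d rho x s b)
  (Hab : 4056 / 1000 <= d a b)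
  (c : R -> X) (L : R) (Hc : geod_seg d c L a b) (u : R) (Hu : 0 <= u <= L) :
  in_horoball_t d rho x s (2 / 3 * Rmin (d (c u) a) (d (c u) b)) (c u).
Proof.
  pose proof Hmet as Hm. destruct Hm as [Hpos [Hzero [Hsym Htri]]].
  pose proof Hc as Hc'. destruct Hc' as [HL0 [Hc0 [HcL Hcd]]].
  assert (HdL : d a b = L). { rewrite <- Hc0, <- HcL, Hcd by lra. rewrite Rabs_left1; lra. }
  assert (HL : 4056/1000 <= L) by lra.
  assert (Hua : d (c u) a = u). { rewrite <- Hc0, Hcd by lra. rewrite Rabs_right; lra. }
  assert (Hub : d (c u) b = L - u). { rewrite <- HcL, Hcd by lra. rewrite Rabs_left1; lra. }
  rewrite Hua, Hub.
  destruct (buse_exists X d rho Hmet Hrho x) as [Gx [Gx1 Gx2]].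
  destruct (buse_exists X d rho Hmet Hrho a) as [Ga [Ga1 Ga2]].
  destruct (buse_exists X d rho Hmet Hrho b) as [Gb [Gb1 Gb2]].
  destruct (buse_exists X d rho Hmet Hrho (c u)) as [Gy [Gy1 Gy2]].
  assert (Hsa : s = Gx - Ga) by (eapply buse_unique; [exact Ha| apply buse_lim_of; auto]).
  assert (Hsb : s = Gx - Gb) by (eapply buse_unique; [exact Hb| apply buse_lim_of; auto]).
  exists (Gx - Gy). split; [apply buse_lim_of; auto|].
  set (k := 2/3 * Rmin u (L-u)).
  set (F := sh (L-u)/sh L + sh u/sh L).
  assert (HshL : 0 < sh L) by (apply sh_pos; lra).
  assert (HF : F <= exp (-k)).
  { unfold F, k. destruct (Rle_dec u (L/2)).
    - rewrite Rmin_left by lra. pose proof (sinh_key L u HL ltac:(lra)).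
      apply Rmult_le_reg_r with (sh L); auto. field_simplify; lra.
    - rewrite Rmin_right by lra. pose proof (sinh_key L (L-u) HL ltac:(lra)).
      replace (L - (L-u)) with u in H by ring.
      apply Rmult_le_reg_r with (sh L); auto. field_simplify; lra. }
  assert (Hk : 0 <= k).
  { unfold k. apply Rmult_le_pos; [lra|]. apply Rmin_glb; lra. }
  assert (HF1 : F <= 1).
  { eapply Rle_trans; [exact HF|]. rewrite <- exp_0. apply exp_le_mono. lra. }
  assert (HF0 : 0 <= F).
  { unfold F, Rdiv. assert (0 <= sh (L-u)) by (apply sh_nonneg; lra).
    assert (0 <= sh u) by (apply sh_nonneg; lra).
    assert (0 < / sh L) by (apply Rinv_0_lt_compat; lra). nra. }
  assert (Key : exp Gy <= F * exp Ga).
  { apply (eps_le_lem _ _ (F * exp Ga)).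
    { pose proof (exp_pos Ga). nra. }
    intros eta Heta.
    set (eps := ln (1 + eta)).
    assert (Heps : 0 < eps) by (unfold eps; rewrite <- ln_1; apply ln_increasing; lra).
    assert (Eeps : exp eps = 1 + eta) by (unfold eps; apply exp_ln; lra).
    destruct (Ga2 eps Heps) as [Ta [HTa Ka]].
    destruct (Gb2 eps Heps) as [Tb [HTb Kb]].
    set (t := Rmax (Rmax Ta Tb) (Rmax 0 (ln (/ eta)))).
    assert (Ht1 : Ta <= t) by (unfold t; eapply Rle_trans; [apply Rmax_l| apply Rmax_l]).
    assert (Ht2 : Tb <= t) by (unfold t; eapply Rle_trans; [apply Rmax_r| apply Rmax_l]).
    assert (Ht3 : 0 <= t) by (unfold t; eapply Rle_trans; [apply Rmax_l| apply Rmax_r]).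
    assert (Ht4 : ln (/ eta) <= t) by (unfold t; eapply Rle_trans; [apply Rmax_r| apply Rmax_r]).
    specialize (Ka t Ht1). specialize (Kb t Ht2). specialize (Gy1 t Ht3).
    pose proof (geom X d Hmet Hgeod Hcat a b c L Hc u Hu ltac:(lra) (rho t)) as G.
    fold F in G.
    set (al := sh (L-u)/sh L) in *. set (be := sh u/sh L) in *.
    assert (Hal : 0 <= al) by (unfold al, Rdiv; apply Rmult_le_pos; [apply sh_nonneg; lra| left; apply Rinv_0_lt_compat; lra]).
    assert (Hbe : 0 <= be) by (unfold be, Rdiv; apply Rmult_le_pos; [apply sh_nonneg; lra| left; apply Rinv_0_lt_compat; lra]).
    assert (EW : exp t * exp Gy <= exp (d (c u) (rho t))) by (rewrite <- exp_plus; apply exp_le_mono; lra).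
    assert (EA : exp (d a (rho t)) <= exp t * exp Ga * (1 + eta)).
    { rewrite <- Eeps, <- !exp_plus. apply exp_le_mono. lra. }
    assert (EB : exp (d b (rho t)) <= exp t * exp Ga * (1 + eta)).
    { rewrite <- Eeps, <- !exp_plus. apply exp_le_mono. lra. }
    assert (Et : / eta <= exp t).
    { rewrite <- (exp_ln (/ eta)) by (apply Rinv_0_lt_compat; lra). apply exp_le_mono; lra. }
    assert (Et2 : 1 <= exp t * eta).
    { apply Rmult_le_compat_r with (r := eta) in Et; [|lra]. rewrite Rinv_l in Et by lra. lra. }
    pose proof (exp_pos t). pose proof (exp_pos Ga).
    set (et := exp t) in *. set (ea := exp Ga) in *.
    assert (al * exp (d a (rho t)) <= al * (et * ea * (1 + eta))) by (apply Rmult_le_compat_l; lra).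
    assert (be * exp (d b (rho t)) <= be * (et * ea * (1 + eta))) by (apply Rmult_le_compat_l; lra).
    assert (Hmain : et * exp Gy <= et * (F * ea + eta * (F * ea) + eta)).
    { assert (F <= et * eta) by lra.
      assert (et * (F * ea + eta * (F * ea) + eta) = (al + be) * (et * ea * (1 + eta)) + et * eta) by (unfold F; ring).
      unfold F in *. nra. }
    apply Rmult_le_reg_l in Hmain; lra. }
  assert (Hy : Gy <= Ga - k).
  { apply Rnot_lt_le. intro Hl. apply exp_increasing in Hl.
    unfold Rminus in Hl. rewrite exp_plus in Hl. pose proof (exp_pos Ga).
    assert (F * exp Ga <= exp (-k) * exp Ga) by (apply Rmult_le_compat_r; lra). lra. }
  lra.
Qed.
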